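(* Let $N\ge1$. Consider elastic $N$-soliton solutions of KPII, each described by the set $\{[e_n,g_n]\}_{n=1}^N$ of distinct index pairs with $e_n<g_n$, where $e_1,\dots,e_N$ are the pivot columns and $g_1,\dots,g_N$ the non-pivot columns of its $N\times 2N$ coefficient matrix $A$ (so $\{e_n\}\sqcup\{g_n\}=\{1,\dots,2N\}$). Then: (i) With the pivots ordered as $e_1<e_2<\dots<e_N$, one has $e_1=1$, $e_N<2N$, and $n\le e_n\le 2n-1$ for each $n=1,\dots,N$; the number of possible choices of the pivot set is the Catalan number $C_N=\frac{(2N)!}{N!\,(N+1)!}$. (ii) For a fixed ordered pivot set $\{e_1<\dots<e_N\}$, the number of possible (unordered) choices of non-pivot indices $\{g_1,\dots,g_N\}$ paired with the pivots such that $e_n<g_n$ for all $n$ is $\prod_{n=1}^N(2n-e_n)$. (iii) The total number of ways of choosing the $N$ distinct pairs $\{[e_n,g_n]\}_{n=1}^N$ (partitioning $\{1,\dots,2N\}$) is $(2N-1)!!$.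
   Context: Setting: $k_1<\dots<k_{2N}$ real, $\theta_m=k_mx+k_m^2y+k_m^3t+\theta_{0m}$, $A$ a real $N\times 2N$ matrix in reduced row-echelon form of rank $N$, all nonzero $N\times N$ minors positive, every column having a nonzero entry and every row having a nonzero entry besides its pivot, and satisfying the duality condition $A(m_1,\dots,m_N)=0\iff A(l_1,\dots,l_N)=0$ for every disjoint partition $\{m_i\}\sqcup\{l_i\}=\{1,\dots,2N\}$ (here $A(m_1,\dots,m_N)$ is the minor on those columns). The $\tau$-function is $\tau=\sum_{m_1<\dots<m_N}A(m_1,\dots,m_N)e^{\theta_{m_1}+\dots+\theta_{m_N}}\prod_{s<r}(k_{m_r}-k_{m_s})$, and $u=2(\log\tau)_{xx}$ solves KPII $(-4u_t+u_{xxx}+6uu_x)_x+3u_{yy}=0$; such $u$ are the elastic $N$-soliton solutions. Each such solution has $N$ asymptotic line solitons as $y\to\pm\infty$ labeled by the pairs $[e_n,g_n]$, i.e. localized near the lines $\theta_{e_n}=\theta_{g_n}$ with amplitude $k_{g_n}-k_{e_n}$ and direction $k_{g_n}+k_{e_n}$. *)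

(* Defs.v *)
(* Combinatorics of the index pairs [e_n, g_n] of elastic
   N-soliton solutions of KPII.  Indices 1..2N are represented by the
   ordinals 'I_(N.*2) (ordinal i stands for the index i+1). *)
From mathcomp Require Import all_boot all_order.
Set Implicit Arguments. Unset Strict Implicit. Unset Printing Implicit Defensive.

Definition is_pairing (N : nat) (P : {set 'I_(N.*2) * 'I_(N.*2)}) : bool :=
  [forall p in P, p.1 < p.2] &&
  [forall i : 'I_(N.*2), #|[set p in P | (p.1 == i) || (p.2 == i)]| == 1].

Definition pivots (N : nat) (P : {set 'I_(N.*2) * 'I_(N.*2)}) : {set 'I_(N.*2)} :=
  [set p.1 | p in P].

(* The 1-based values of a set of indices, sorted increasingly:
   nth 0 (pivot_seq E) (n-1) = e_n. *)
Definition pivot_seq (N : nat) (E : {set 'I_(N.*2)}) : seq nat :=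
  sort leq [seq (val i).+1 | i in E].

Fixpoint dfact (n : nat) : nat :=
  match n with
  | 0 => 1
  | 1 => 1
  | (m.+2) as k => k * dfact m
  end.

(* Main.v *)
Require Import Defs.
From mathcomp Require Import all_boot all_order.
From mathcomp Require Import zify.
Set Implicit Arguments. Unset Strict Implicit. Unset Printing Implicit Defensive.

Definition matching (M : nat) (S : {set 'I_M}) (P : {set 'I_M * 'I_M}) : bool :=
  [forall p in P, p.1 < p.2] &&
  [forall i : 'I_M, #|[set p in P | (p.1 == i) || (p.2 == i)]| == (i \in S)].

Definition piv (M : nat) (P : {set 'I_M * 'I_M}) : {set 'I_M} := [set p.1 | p in P].

Lemma match_lt M (S : {set 'I_M}) P p : matching S P -> p \in P -> p.1 < p.2.
Proof. by case/andP => /forall_inP H _ /H. Qed.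

Lemma match_card M (S : {set 'I_M}) P i :
  matching S P -> #|[set p in P | (p.1 == i) || (p.2 == i)]| = (i \in S).
Proof. by case/andP => _ /forallP /(_ i) /eqP. Qed.

Lemma match_uniq M (S : {set 'I_M}) P p q i : matching S P -> p \in P -> q \in P ->
  (p.1 == i) || (p.2 == i) -> (q.1 == i) || (q.2 == i) -> p = q.
Proof.
move=> hm pP qP ci cq.
have : #|[set p in P | (p.1 == i) || (p.2 == i)]| <= 1 by rewrite (match_card i hm); case: (i \in S).
move/card_le1_eqP; apply; by rewrite inE ?pP ?qP.
Qed.

Lemma match_inS M (S : {set 'I_M}) P p i : matching S P -> p \in P ->
  (p.1 == i) || (p.2 == i) -> i \in S.
Proof.
move=> hm pP ci.
have : 0 < #|[set p in P | (p.1 == i) || (p.2 == i)]|.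
  by apply/card_gt0P; exists p; rewrite inE pP.
by rewrite (match_card i hm); case: (i \in S).
Qed.

Lemma match_cover M (S : {set 'I_M}) P i : matching S P -> i \in S ->
  exists2 p, p \in P & (p.1 == i) || (p.2 == i).
Proof.
move=> hm iS.
have : 0 < #|[set p in P | (p.1 == i) || (p.2 == i)]| by rewrite (match_card i hm) iS.
by case/card_gt0P => p; rewrite inE => /andP[pP ci]; exists p.
Qed.

Lemma match_remove M (S : {set 'I_M}) P e c : matching S P -> (e, c) \in P ->
  matching (S :\ e :\ c) (P :\ (e, c)).
Proof.
move=> hm ecP; apply/andP; split.
  apply/forall_inP => p; rewrite inE => /andP[_ pP]; exact: match_lt hm pP.
apply/forallP => i; apply/eqP.
have eS : e \in S by apply: (@match_inS _ S P (e, c) e hm ecP); rewrite /= eqxx.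
have cS : c \in S by apply: (@match_inS _ S P (e, c) c hm ecP); rewrite /= eqxx orbT.
have := match_card i hm.
rewrite (cardsD1 (e, c)).
have -> : [set p in P | (p.1 == i) || (p.2 == i)] :\ (e, c) =
          [set p in P :\ (e, c) | (p.1 == i) || (p.2 == i)].
  by apply/setP => p; rewrite !inE andbA.
rewrite !inE ecP /=.
move: (#|_|) => n.
case: (eqVneq e i) => [<-|nei].
  rewrite eS /=; lia.
case: (eqVneq c i) => [<-|nci].
  rewrite cS orbT /=; lia.
by rewrite /=; case: (c \in S) => /=; lia.
Qed.

Lemma match_notin M (S : {set 'I_M}) Q e c : matching (S :\ e :\ c) Q -> (e, c) \notin Q.
Proof.
move=> hm; apply/negP => ecQ.
have := @match_inS _ _ Q (e, c) e hm ecQ; rewrite /= eqxx /= => /(_ isT).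
by rewrite !inE eqxx andbF.
Qed.

Lemma match_add M (S : {set 'I_M}) Q e c : matching (S :\ e :\ c) Q ->
  e \in S -> c \in S -> e < c -> matching S ((e, c) |: Q).
Proof.
move=> hm eS cS ec; have ecQ := match_notin hm.
apply/andP; split.
  apply/forall_inP => p; rewrite !inE => /orP[/eqP -> //|pQ]; exact: match_lt hm pQ.
apply/forallP => i; apply/eqP.
have := match_card i hm.
have -> : [set p in (e, c) |: Q | (p.1 == i) || (p.2 == i)] =
   if (e == i) || (c == i) then (e, c) |: [set p in Q | (p.1 == i) || (p.2 == i)]
   else [set p in Q | (p.1 == i) || (p.2 == i)].
  apply/setP => p; rewrite !inE. case: (eqVneq p (e, c)) => [->|pne] /=.
    by case: ifP => h; rewrite !inE ?eqxx ?h // (negbTE ecQ).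
  by case: ifP => h; rewrite !inE ?(negbTE pne).
have nin : (e, c) \notin [set p in Q | (p.1 == i) || (p.2 == i)].
  by rewrite inE (negbTE ecQ).
set Y := [set p in Q | _] in nin *.
have -> : #|if (e == i) || (c == i) then (e, c) |: Y else Y| = ((e == i) || (c == i)) + #|Y|.
  by case: ifP => _; rewrite ?cardsU1 ?nin.
move: (#|Y|) => n.
case: (eqVneq e i) => [<-|nei].
  rewrite !inE eqxx andbF eS /=; lia.
case: (eqVneq c i) => [<-|nci].
  rewrite !inE eqxx cS /=; lia.
by rewrite !inE eq_sym nci eq_sym nei.
Qed.

Lemma piv_remove M (S : {set 'I_M}) P e c : matching S P -> (e, c) \in P ->
  piv (P :\ (e, c)) = piv P :\ e.
Proof.
move=> hm ecP; apply/setP => x; rewrite !inE.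
apply/imsetP/andP.
  case=> [[y z]]; rewrite !inE => /andP[ne yzP] /= ->; split; last first.
    by apply/imsetP; exists (y, z).
  apply: contra ne => /eqP ye; apply/eqP; apply: (match_uniq (i := e)) hm yzP ecP _ _.
    by rewrite /= ye eqxx.
  by rewrite /= eqxx.
case=> xe /imsetP [[y z] yzP /= xy]; exists (y, z) => //.
by rewrite !inE yzP andbT; apply: contra xe => /eqP [<- _]; rewrite xy.
Qed.

Lemma piv_add M (Q : {set 'I_M * 'I_M}) e c : piv ((e, c) |: Q) = e |: piv Q.
Proof. by rewrite /piv imsetU1. Qed.

Lemma match_ecS M (S : {set 'I_M}) P e c : matching S P -> (e, c) \in P ->
  [/\ e \in S, c \in S & e < c].
Proof.
move=> hm ecP; split; last exact: (match_lt hm ecP).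
  by apply: (@match_inS _ S P (e, c) e hm ecP); rewrite /= eqxx.
by apply: (@match_inS _ S P (e, c) c hm ecP); rewrite /= eqxx orbT.
Qed.

Lemma card_D2 M (S : {set 'I_M}) e c : e \in S -> c \in S -> e != c ->
  #|S :\ e :\ c| = #|S| - 2.
Proof.
move=> eS cS ne.
have := cardsD1 e S; have := cardsD1 c (S :\ e).
rewrite eS !inE eq_sym ne cS /=; lia.
Qed.

Lemma match_size k M (S : {set 'I_M}) (P : {set 'I_M * 'I_M}) : #|P| = k -> matching S P ->
  #|S| = (#|piv P|).*2.
Proof.
elim: k S P => [|k IH] S P hk hm.
  have P0 : P = set0 by apply: cards0_eq.
  have -> : S = set0.
    apply/setP => i; rewrite inE; apply/negP => iS.
    by case: (match_cover hm iS) => p; rewrite P0 inE.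
  by rewrite /piv P0 imset0 cards0.
have : 0 < #|P| by rewrite hk.
case/card_gt0P => [[e c] ecP].
have hm' := match_remove hm ecP.
case: (match_ecS hm ecP) => eS cS ec.
have := IH _ _ _ hm'; rewrite (piv_remove hm ecP).
have := cardsD1 (e, c) P; rewrite ecP hk.
have epiv : e \in piv P by apply/imsetP; exists (e, c).
have := cardsD1 e (piv P); rewrite epiv.
rewrite card_D2 //; last by rewrite neq_ltn ec.
have : 0 < #|S :\ e| by apply/card_gt0P; exists c; rewrite !inE cS andbT neq_ltn ec orbT.
have := cardsD1 e S; rewrite eS => h0.
move=> h1 h2 h3 h4; have := h4 (esym (eq_add_S _ _ h3)).
move: h0 h2 => /= h0 h2; rewrite -!mul2n => h5.
move: h0 h1 h2 h5; move: (#|S :\ e|) (#|piv P :\ e|) (#|S|) (#|piv P|) => a b s p; lia.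
Qed.

Lemma card_sum_bool (U : finType) (C : {set U}) (f : U -> bool) :
  #|[set c in C | f c]| = \sum_(c in C) f c.
Proof.
rewrite -sum1_card [LHS]big_mkcond [RHS]big_mkcond; apply: eq_bigr => c _.
by rewrite inE; case: (c \in C); case: (f c).
Qed.

Lemma count_split (T U : finType) (A : {set T}) (C : {set U}) (R : T -> U -> bool) :
  (forall x, x \in A -> #|[set c in C | R x c]| = 1) ->
  #|A| = \sum_(c in C) #|[set x in A | R x c]|.
Proof.
move=> h.
rewrite -sum1_card (eq_bigr (fun x => \sum_(c in C) (R x c : nat))); last first.
  by move=> x xA; rewrite -card_sum_bool h.
by rewrite exchange_big; apply: eq_bigr => c _; rewrite card_sum_bool.
Qed.

Lemma split_count M (S : {set 'I_M}) e c (Phi Phi' : {set 'I_M * 'I_M} -> bool) :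
  e \in S -> c \in S -> e < c ->
  (forall Q, matching (S :\ e :\ c) Q -> Phi ((e, c) |: Q) = Phi' Q) ->
  #|[set P | [&& matching S P, Phi P & (e, c) \in P]]| =
  #|[set Q | matching (S :\ e :\ c) Q & Phi' Q]|.
Proof.
move=> eS cS ec hPhi.
rewrite -[RHS](@card_in_imset _ _ (fun Q => (e, c) |: Q)); last first.
  move=> Q1 Q2; rewrite !inE => /andP[h1 _] /andP[h2 _] eq.
  by rewrite -(setU1K (match_notin h1)) eq setU1K // (match_notin h2).
congr #|pred_of_set _|; apply/setP => P; rewrite inE; apply/and3P/imsetP.
  case=> hm hP ecP; exists (P :\ (e, c)); last by rewrite setD1K.
  have hm' := match_remove hm ecP.
  by rewrite inE hm' /= -hPhi // setD1K.
case=> Q; rewrite inE => /andP[hm hQ] ->; split.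
- exact: match_add.
- by rewrite hPhi.
- by rewrite setU11.
Qed.

Lemma dfactS k : dfact (k.*2.+1) = k.*2.+1 * dfact (k.*2 - 1).
Proof. by case: k => [|k] //=; rewrite subn1. Qed.

Lemma exists_min M (S : {set 'I_M}) : 0 < #|S| ->
  exists2 m, m \in S & forall x, x \in S -> m <= x.
Proof.
case/card_gt0P => x0 x0S.
case: (@arg_minnP _ x0 (fun x => x \in S) val x0S) => m mS mmin.
by exists m.
Qed.

Lemma exists_max M (S : {set 'I_M}) : 0 < #|S| ->
  exists2 m, m \in S & forall x, x \in S -> x <= m.
Proof.
case/card_gt0P => x0 x0S.
case: (@arg_maxnP _ x0 (fun x => x \in S) val x0S) => m mS mmax.
by exists m.
Qed.

Lemma match0 M (P : {set 'I_M * 'I_M}) : matching set0 P = (P == set0).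
Proof.
apply/idP/eqP.
  move=> hm; apply/setP => p; rewrite inE; apply/negP => pP.
  by have := @match_inS _ _ P p p.1 hm pP; rewrite eqxx inE => /(_ isT).
move=> ->; apply/andP; split; first by apply/forall_inP => p; rewrite inE.
apply/forallP => i; rewrite inE; apply/eqP/eqP; rewrite cards_eq0; apply/eqP/setP => p.
by rewrite !inE.
Qed.

Lemma count_all k M (S : {set 'I_M}) : #|S| = k.*2 ->
  #|[set P | matching S P]| = dfact (k.*2 - 1).
Proof.
elim: k S => [|k IH] S hS.
  have -> : S = set0 by apply: cards0_eq.
  have -> : [set P | matching set0 P] = [set set0] :> {set {set 'I_M * 'I_M}}.
    by apply/setP => P; rewrite !inE match0.
  by rewrite cards1.
have [m mS mmin] : exists2 m, m \in S & forall x, x \in S -> m <= x.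
  by apply: exists_min; rewrite hS.
rewrite (@count_split _ _ _ (S :\ m) (fun (P : {set 'I_M * 'I_M}) c => (m, c) \in P)); last first.
  move=> P; rewrite inE => hm.
  case: (match_cover hm mS) => [[x y] xyP] /= /orP[/eqP xm|/eqP ym].
    rewrite xm in xyP.
    case: (match_ecS hm xyP) => _ yS my.
    rewrite (_ : [set c in S :\ m | (m, c) \in P] = [set y]) ?cards1 //.
    apply/setP => z; rewrite !inE; apply/andP/eqP => [[_ mzP]|->].
      by have := @match_uniq _ _ P _ _ m hm mzP xyP; rewrite /= eqxx => /(_ isT isT) [].
    by rewrite xyP yS neq_ltn my orbT.
  rewrite ym in xyP; case: (match_ecS hm xyP) => xS _ xm.
  by have := mmin _ xS; rewrite leqNgt xm.
rewrite (eq_bigr (fun _ => dfact (k.*2 - 1))); last first.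
  move=> c; rewrite !inE => /andP[cm cS].
  have mc : m < c by rewrite ltn_neqAle mmin // andbT; apply: contra cm => /eqP/val_inj ->.
  rewrite -(IH (S :\ m :\ c)); last first.
    rewrite card_D2 // ?hS; last by rewrite neq_ltn mc.
    by rewrite doubleS; lia.
  transitivity #|[set P | [&& matching S P, predT P & (m, c) \in P]]|.
    by congr #|pred_of_set _|; apply/setP => P; rewrite !inE.
  rewrite (@split_count _ S m c predT predT) //.
  by congr #|pred_of_set _|; apply/setP => P; rewrite !inE andbT.
rewrite sum_nat_const.
have := cardsD1 m S; rewrite mS hS /= doubleS => h.
rewrite (_ : #|S :\ m| = k.*2.+1); last by move: h; rewrite -!mul2n; move: (#|S :\ m|) => a /=; lia.
by rewrite -dfactS.
Qed.

Definition F M (S E : {set 'I_M}) (e : 'I_M) : nat :=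
  #|[set c in S :\: E | e < c]| - #|[set x in E | e < x]|.

Lemma setU1_eqD1 (T : finType) (E X : {set T}) e : e \in E -> e \notin X ->
  (e |: X == E) = (X == E :\ e).
Proof.
move=> eE eX; apply/eqP/eqP => [<-|->]; first by rewrite setU1K.
by rewrite setD1K.
Qed.

Lemma piv_sub M (S : {set 'I_M}) P : matching S P -> piv P \subset S.
Proof.
move=> hm; apply/subsetP => x /imsetP [p pP ->].
by apply: (match_inS (i := p.1) hm pP); rewrite eqxx.
Qed.

Lemma count_piv k M (S E : {set 'I_M}) : #|E| = k -> E \subset S -> #|S| = k.*2 ->
  #|[set P | matching S P & piv P == E]| = \prod_(e in E) F S E e.
Proof.
elim: k S E => [|k IH] S E hE ES hS.
  have E0 : E = set0 by apply: cards0_eq.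
  have -> : S = set0 by apply: cards0_eq.
  have -> : [set P | matching set0 P & piv P == E] = [set set0] :> {set {set 'I_M * 'I_M}}.
    apply/setP => P; rewrite !inE match0 E0; apply/andP/idP => [[]//|/eqP ->].
    by rewrite /piv imset0.
  by rewrite cards1 E0 big_set0.
have [e eE emax] : exists2 e, e \in E & forall x, x \in E -> x <= e.
  by apply: exists_max; rewrite hE.
have eS : e \in S := subsetP ES e eE.
set C := [set c in S :\: E | e < c].
rewrite (@count_split _ _ _ C (fun (P : {set 'I_M * 'I_M}) c => (e, c) \in P)); last first.
  move=> P; rewrite inE => /andP[hm /eqP pE].
  have : e \in piv P by rewrite pE.
  case/imsetP => [[x y] xyP /= ex]; rewrite -ex in xyP.
  case: (match_ecS hm xyP) => _ yS ey.
  rewrite (_ : [set c in C | (e, c) \in P] = [set y]) ?cards1 //.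
  apply/setP => z; rewrite !inE; apply/andP/eqP => [[_ ezP]|->].
    by have := @match_uniq _ _ P _ _ e hm ezP xyP; rewrite /= eqxx => /(_ isT isT) [].
  rewrite xyP yS ey !andbT /=; split => //; apply/negP; rewrite -pE => /imsetP [[u v] uvP /= yu].
  have := @match_uniq _ _ P _ _ y hm xyP uvP; rewrite /= yu !eqxx orbT => /(_ isT isT) [eu _].
  by move: ey; rewrite yu -eu ltnn.
have eC : #|[set x in E | e < x]| = 0.
  apply/eqP; rewrite cards_eq0; apply/eqP/setP => x; rewrite !inE.
  by apply/negP => /andP[xE ex]; have := emax _ xE; rewrite leqNgt ex.
rewrite (eq_bigr (fun _ => \prod_(x in E :\ e) F S E x)); last first.
  move=> c; rewrite !inE => /andP[/andP[cE cS] ec].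
  have ce : c != e by apply: contra cE => /eqP ->.
  have hS' : #|S :\ e :\ c| = k.*2.
    rewrite card_D2 // ?hS; last by rewrite neq_ltn ec.
    by rewrite doubleS; lia.
  have ES' : E :\ e \subset S :\ e :\ c.
    apply/subsetP => x; rewrite !inE => /andP[xe xE].
    rewrite xe (subsetP ES x xE) andbT andbT; apply: contra cE => /eqP <-; done.
  have hE' : #|E :\ e| = k by have := cardsD1 e E; rewrite eE hE /=; lia.
  transitivity #|[set P | [&& matching S P, piv P == E & (e, c) \in P]]|.
    by congr #|pred_of_set _|; apply/setP => P; rewrite !inE andbA.
  rewrite (@split_count _ S e c _ (fun Q => piv Q == E :\ e)) //; last first.
    move=> Q hQ; rewrite piv_add setU1_eqD1 //.
    by apply/negP => /(subsetP (piv_sub hQ)); rewrite !inE eqxx andbF.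
  rewrite (IH _ _ hE' ES' hS'); apply: eq_bigr => x; rewrite !inE => /andP[xe xE].
  have xlte : x < e by rewrite ltn_neqAle emax // andbT; apply: contra xe => /eqP/val_inj ->.
  rewrite /F.
  have -> : [set c0 in (S :\ e :\ c) :\: (E :\ e) | x < c0] = [set c0 in S :\: E | x < c0] :\ c.
    apply/setP => z; rewrite !inE.
    case: (eqVneq z c) => //= zc; case: (eqVneq z e) => [->|ze] /=; rewrite ?eE ?andbF ?andbT //=.
  have -> : [set y in E :\ e | x < y] = [set y in E | x < y] :\ e.
    by apply/setP => z; rewrite !inE andbA.
  have := cardsD1 c [set c0 in S :\: E | x < c0]; rewrite !inE cE cS (ltn_trans xlte ec) /=.
  have := cardsD1 e [set y in E | x < y]; rewrite !inE eE xlte /=.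
  move: (#|_ :\ c|) (#|_ :\ e|) (#|[set c0 in S :\: E | x < c0]|) (#|[set y in E | x < y]|).
  move=> a b a' b' h1 h2; rewrite h1 h2; lia.
rewrite sum_nat_const [RHS](bigD1 e) //=; congr (_ * _).
  by rewrite /F eC subn0.
by apply: eq_bigl => x; rewrite !inE andbC.
Qed.

Definition goodS M (S E : {set 'I_M}) : bool := [forall e in E, 0 < F S E e].

Fixpoint bal n a : nat :=
  match n with
  | 0 => nat_of_bool (a == 0)
  | n'.+1 => bal n' a + (if a is a'.+1 then (a' < n' - a') * bal n' a' else 0)
  end.

Lemma F_out M (S E : {set 'I_M}) (m e : 'I_M) : (forall x, x \in S -> m <= x) ->
  e \in E -> E \subset S -> F S E e = F (S :\ m) E e.
Proof.
move=> mmin eE ES; rewrite /F; congr (#|pred_of_set _| - _); apply/setP => c; rewrite !inE.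
case: (eqVneq c m) => [->|] //=; rewrite andbF.
by case: (boolP (e < m)) => // em; have := mmin _ (subsetP ES e eE); rewrite leqNgt em ?andbF ?andbT.
Qed.

Lemma F_in_m M (S E' : {set 'I_M}) (m : 'I_M) : m \in S -> (forall x, x \in S -> m <= x) ->
  E' \subset S :\ m -> F S (m |: E') m = #|S :\ m| - #|E'| - #|E'|.
Proof.
move=> mS mmin ES; rewrite /F.
have -> : [set c in S :\: (m |: E') | m < c] = (S :\ m) :\: E'.
  apply/setP => c; rewrite !inE; case: (eqVneq c m) => [->|cm] /=; first by rewrite ?ltnn ?andbF.
  case: (boolP (c \in S)) => cS; rewrite ?andbF ?andbT //.
  have -> // : m < c by rewrite ltn_neqAle mmin // andbT eq_sym; apply: contra cm => /eqP/val_inj ->.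
  by rewrite andbT.
have -> : [set x in m |: E' | m < x] = E'.
  apply/setP => c; rewrite !inE; case: (eqVneq c m) => [->|cm] /=.
    by rewrite ltnn; apply/esym/negP => /(subsetP ES); rewrite !inE eqxx.
  case: (boolP (c \in E')) => cE //=; have := subsetP ES c cE; rewrite !inE => /andP[_ cS].
  by rewrite ltn_neqAle mmin // andbT eq_sym; apply: contra cm => /eqP/val_inj ->.
by rewrite cardsD (setIidPr ES).
Qed.

Lemma F_in M (S E' : {set 'I_M}) (m e : 'I_M) : (forall x, x \in S -> m <= x) ->
  E' \subset S :\ m -> e \in E' -> F S (m |: E') e = F (S :\ m) E' e.
Proof.
move=> mmin ES eE; have := subsetP ES e eE; rewrite !inE => /andP[em eS].
have me : m < e by rewrite ltn_neqAle mmin // andbT eq_sym; apply: contra em => /eqP/val_inj ->.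
rewrite /F; congr (_ - _); apply: eq_card => c; rewrite !inE.
  by case: (eqVneq c m) => [->|] /=; rewrite ?andbF ?andbT.
by case: (eqVneq c m) => [->|] //=; rewrite ltnNge (ltnW me) !andbF.
Qed.

Lemma goodS_out M (S E : {set 'I_M}) (m : 'I_M) : (forall x, x \in S -> m <= x) ->
  E \subset S -> goodS S E = goodS (S :\ m) E.
Proof.
move=> mmin ES; apply: eq_forallb => e.
by case: (boolP (e \in E)) => //= eE; rewrite (F_out mmin eE ES).
Qed.

Lemma goodS_in M (S E' : {set 'I_M}) (m : 'I_M) : m \in S -> (forall x, x \in S -> m <= x) ->
  E' \subset S :\ m ->
  goodS S (m |: E') = (#|E'| < #|S :\ m| - #|E'|) && goodS (S :\ m) E'.
Proof.
move=> mS mmin ES; rewrite /goodS; apply/forall_inP/andP.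
  move=> h; split.
    by have := h m (setU11 _ _); rewrite F_in_m // subn_gt0.
  by apply/forall_inP => e eE; have := h e; rewrite F_in //; apply; rewrite !inE eE orbT.
case=> h1 /forall_inP h2 e; rewrite !inE => /orP[/eqP ->|eE].
  by rewrite F_in_m // subn_gt0.
by rewrite F_in //; apply: h2.
Qed.

Lemma count_good n M (S : {set 'I_M}) a : #|S| = n ->
  #|[set E : {set 'I_M} | [&& E \subset S, #|E| == a & goodS S E]]| = bal n a.
Proof.
elim: n S a => [|n IH] S a hS.
  have S0 : S = set0 by apply: cards0_eq.
  case: a => [|a] /=.
    rewrite (_ : [set E : {set 'I_M} | _] = [set set0]) ?cards1 //.
    apply/setP => E; rewrite !inE S0 subset0; apply/andP/eqP => [[/eqP //]|->].
    by rewrite eqxx cards0; split=> //; apply/forall_inP => e; rewrite inE.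
  apply/eqP; rewrite cards_eq0; apply/eqP/setP => E; rewrite !inE S0 subset0.
  by apply/negP => /andP[/eqP -> ]; rewrite cards0.
have [m mS mmin] : exists2 m, m \in S & forall x, x \in S -> m <= x.
  by apply: exists_min; rewrite hS.
have hS' : #|S :\ m| = n by have := cardsD1 m S; rewrite mS hS /=; lia.
rewrite -(cardsID [set E : {set 'I_M} | m \in E]) /=.
have -> : [set E : {set 'I_M} | [&& E \subset S, #|E| == a & goodS S E]] :\: [set E : {set 'I_M} | m \in E]
    = [set E : {set 'I_M} | [&& E \subset S :\ m, #|E| == a & goodS (S :\ m) E]].
  apply/setP => E; rewrite !inE subsetD1.
  case: (boolP (m \in E)) => mE /=; rewrite ?andbF //.
  case: (boolP (E \subset S)) => ES //=; by rewrite (goodS_out mmin ES).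
rewrite IH // addnC; congr (_ + _).
have -> : [set E : {set 'I_M} | [&& E \subset S, #|E| == a & goodS S E]] :&: [set E : {set 'I_M} | m \in E]
   = (fun E' => m |: E') @: [set E' : {set 'I_M} | [&& E' \subset S :\ m, (#|E'|).+1 == a,
        goodS (S :\ m) E' & #|E'| < n - #|E'|]].
  apply/setP => E; rewrite !inE; apply/andP/imsetP.
    case=> /and3P[ES /eqP hE gE] mE; exists (E :\ m); last by rewrite setD1K.
    have ES' : E :\ m \subset S :\ m by apply: setSD.
    have := cardsD1 m E; rewrite mE /= => hEm.
    move: gE; rewrite -{1}(setD1K mE) goodS_in // hS' => /andP[h1 h2].
    by rewrite inE ES' h2 h1 -hE hEm eqxx.
  case=> E'; rewrite inE => /and4P[ES' /eqP hE' gE' hc] ->.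
  have mE' : m \notin E' by apply/negP => /(subsetP ES'); rewrite !inE eqxx.
  split; last by rewrite setU11.
  rewrite goodS_in // hS' gE' hc cardsU1 mE' /= add1n hE' eqxx andbT.
  rewrite andbT; apply/subsetP => x; rewrite !inE => /orP[/eqP -> //|/(subsetP ES')]; by rewrite !inE => /andP[].
rewrite card_in_imset; last first.
  move=> E1 E2; rewrite !inE => /and4P[h1 _ _ _] /and4P[h2 _ _ _] eq.
  have n1 : m \notin E1 by apply/negP => /(subsetP h1); rewrite !inE eqxx.
  have n2 : m \notin E2 by apply/negP => /(subsetP h2); rewrite !inE eqxx.
  by rewrite -(setU1K n1) eq setU1K.
case: a => [|a].
  apply/eqP; rewrite cards_eq0; apply/eqP/setP => E; rewrite !inE.
  by apply/negP => /and4P[].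
case: (boolP (a < n - a)) => ha /=.
  rewrite mul1n -(IH (S :\ m) a hS'); apply: eq_card => E; rewrite !inE eqSS.
  case: (boolP (#|E| == a)) => /= [/eqP ->|]; rewrite ?andbF //.
  by rewrite ha andbT.
apply/eqP; rewrite mul0n cards_eq0; apply/eqP/setP => E; rewrite !inE eqSS.
apply/negP => /and4P[_ /eqP hE _]; by rewrite hE (negbTE ha).
Qed.

Lemma bal_zero n a : n < a.*2 -> bal n a = 0.
Proof.
elim: n a => [|n IH] a h /=; first by case: a h.
rewrite IH; last by rewrite -!mul2n in h *; lia.
case: a h => [|a] // h.
have -> : (a < n - a) = false by apply/negbTE; rewrite -!mul2n in h; lia.
by [].
Qed.

Lemma binS' n a : 'C(n.+1, a) = 'C(n, a) + (if a is a'.+1 then 'C(n, a') else 0).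
Proof. by case: a => [|a]; rewrite ?bin0 ?binS. Qed.

Lemma bal_form n a : a.*2 <= n ->
  bal n a + (if a is a'.+1 then 'C(n, a') else 0) = 'C(n, a).
Proof.
elim: n a => [|n IH] a h; first by case: a h.
case: a h => [|a] h /=.
  by have := IH 0 (leq0n n); rewrite !addn0 !bin0 => ->.
have -> : (a < n - a) = true by apply/idP; rewrite -!mul2n in h; lia.
rewrite mul1n binS.
have IHa : bal n a + (if a is a'.+1 then 'C(n, a') else 0) = 'C(n, a).
  by apply: IH; rewrite -!mul2n in h *; lia.
have := binS' n a.
case: (leqP (a.+1).*2 n) => h2.
  have := IH a.+1 h2 => /= IH1 hb; lia.
have hn : n = a.*2.+1 by rewrite -!mul2n in h h2 *; lia.
rewrite (bal_zero (n := n) (a := a.+1)); last by rewrite hn -!mul2n; lia.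
have : 'C(n, a.+1) = 'C(n, a).
  by rewrite -(bin_sub (n := n) (m := a.+1)); [congr 'C(_, _); rewrite hn -!mul2n; lia | rewrite hn -!mul2n; lia].
move=> hb1 hb; lia.
Qed.


Lemma catalan k : bal (k.+1.*2) k.+1 = (k.+1.*2)`! %/ (k.+1`! * k.+2`!).
Proof.
have h := bal_form (n := k.+1.*2) (a := k.+1) (leqnn _).
move: (bal _ _) h => X h.
have e1 : 'C(k.+1.*2, k.+1) * (k.+1`! * (k.+1.*2 - k.+1)`!) = (k.+1.*2)`! by apply: bin_fact; rewrite -addnn leq_addr.
have e2 : 'C(k.+1.*2, k) * (k`! * (k.+1.*2 - k)`!) = (k.+1.*2)`! by apply: bin_fact; rewrite -mul2n; lia.
have hs1 : k.+1.*2 - k.+1 = k.+1 by rewrite -addnn addnK.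
have hs2 : k.+1.*2 - k = k.+2 by rewrite -!mul2n; lia.
rewrite hs1 in e1; rewrite hs2 in e2.
rewrite (factS k.+1) (factS k) in e1 e2 *.
have fpos := fact_gt0 k.
move: fpos e1 e2 h; move: (k`!) (k.+1.*2)`! ('C(k.+1.*2, k)) ('C(k.+1.*2, k.+1)) => f T B A fpos e1 e2 h.
have key : X * (k.+1 * f * (k.+2 * (k.+1 * f))) = T.
  have hA : A = X + B by [].
  rewrite hA in e1. nia.
by rewrite -key mulnK // !muln_gt0 /= fpos.
Qed.

Lemma count_gt_iota a M : count (fun j => a < j) (iota 0 M) = M - a.+1.
Proof.
elim: M => [|M IH] //.
have -> : iota 0 M.+1 = iota 0 M ++ [:: M] by rewrite -addn1 iotaD.
rewrite count_cat IH /= addn0.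
by case: (ltnP a M) => h /=; lia.
Qed.

Lemma sum_bool_count (s : seq nat) (P : pred nat) : \sum_(u <- s) (P u : nat) = count P s.
Proof. by elim: s => [|x s IH]; rewrite ?big_nil ?big_cons //= IH. Qed.

Lemma rank_sorted (s : seq nat) i : sorted ltn s -> i < size s ->
  count (fun u => nth 0 s i < u) s = size s - i.+1.
Proof.
move=> ss isz.
have sl : sorted leq s by move: ss; rewrite ltn_sorted_uniq_leq => /andP[].
rewrite -{2}(mkseq_nth 0 s) /mkseq count_map -count_gt_iota.
apply: eq_in_count => j; rewrite mem_iota add0n => /= jsz.
case: (ltnP i j) => h.
  by apply: (sorted_ltn_nth ltn_trans 0 ss); rewrite ?inE.
by apply/negbTE; rewrite -leqNgt; apply: (sorted_leq_nth leq_trans leqnn 0 sl); rewrite ?inE.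
Qed.

Lemma sorted_lower (s : seq nat) i : sorted ltn s -> (forall u, u \in s -> 0 < u) ->
  i < size s -> i < nth 0 s i.
Proof.
move=> ss pos; elim: i => [|i IH] isz.
  by apply: pos; apply: mem_nth.
have := IH (ltnW isz).
have : nth 0 s i < nth 0 s i.+1 by apply: (sorted_ltn_nth ltn_trans 0 ss); rewrite ?inE // ltnW.
lia.
Qed.

Lemma ps_size N (E : {set 'I_(N.*2)}) : size (pivot_seq E) = #|E|.
Proof. by rewrite /pivot_seq size_sort size_image. Qed.

Lemma ps_sorted N (E : {set 'I_(N.*2)}) : sorted ltn (pivot_seq E).
Proof.
rewrite ltn_sorted_uniq_leq sort_uniq sort_sorted ?andbT; last exact: leq_total.
by rewrite map_inj_uniq ?enum_uniq // => x y /= [] /val_inj.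
Qed.

Lemma ps_mem N (E : {set 'I_(N.*2)}) u : u \in pivot_seq E ->
  exists2 e, e \in E & u = (val e).+1.
Proof.
by rewrite /pivot_seq mem_sort => /mapP [e]; rewrite mem_enum => eE ->; exists e.
Qed.

Lemma F_val N (E : {set 'I_(N.*2)}) (e : 'I_(N.*2)) :
  F setT E e = (N.*2 - (val e).+1 - count (fun w => (val e).+1 < w) (pivot_seq E))
               - count (fun w => (val e).+1 < w) (pivot_seq E).
Proof.
have cE : #|[set x in E | e < x]| = count (fun w => (val e).+1 < w) (pivot_seq E).
  rewrite card_sum_bool -sum_bool_count /pivot_seq (perm_big _ (permEl (perm_sort _ _))).
  by rewrite big_image.
have cA : #|[set c : 'I_(N.*2) | e < c]| = N.*2 - (val e).+1.
  have -> : [set c : 'I_(N.*2) | e < c] = [set c in [set: 'I_(N.*2)] | e < c].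
    by apply/setP => c; rewrite !inE.
  rewrite card_sum_bool (eq_bigl (fun _ => true)); last by move=> c; rewrite inE.
  rewrite -(@big_mkord nat 0 addn (N.*2) xpredT (fun j => nat_of_bool (e < j))) /index_iota subn0 sum_bool_count.
  exact: count_gt_iota.
rewrite /F -cE -cA.
have -> : [set c in [set: 'I_(N.*2)] :\: E | e < c] = [set c : 'I_(N.*2) | e < c] :\: E.
  by apply/setP => c; rewrite !inE andbT.
by rewrite cardsD; congr (_ - _ - _); apply: eq_card => c; rewrite !inE andbC.
Qed.

Definition Hs N (E : {set 'I_(N.*2)}) v :=
  (N.*2 - v - count (fun w => v < w) (pivot_seq E)) - count (fun w => v < w) (pivot_seq E).

Lemma F_Hs N (E : {set 'I_(N.*2)}) e : F setT E e = Hs E (val e).+1.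
Proof. exact: F_val. Qed.

Lemma Hs_nth N (E : {set 'I_(N.*2)}) i : #|E| = N -> i < N ->
  Hs E (nth 0 (pivot_seq E) i) = (i.+1).*2 - nth 0 (pivot_seq E) i.
Proof.
move=> hE iN.
have isz : i < size (pivot_seq E) by rewrite ps_size hE.
rewrite /Hs rank_sorted ?ps_sorted // ps_size hE.
have : nth 0 (pivot_seq E) i <= N.*2.
  by case: (ps_mem (mem_nth 0 isz)) => e _ ->; apply: ltn_ord.
move: (nth 0 _ i) => v; rewrite -!mul2n; lia.
Qed.

Lemma prod_conv N (E : {set 'I_(N.*2)}) : #|E| = N ->
  \prod_(e in E) F setT E e = \prod_(1 <= n < N.+1) (n.*2 - nth 0 (pivot_seq E) n.-1).
Proof.
move=> hE.
rewrite (eq_bigr (fun e : 'I_(N.*2) => Hs E (val e).+1)); last by move=> e _; apply: F_Hs.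
rewrite -(@big_image _ _ _ _ _ (fun e : 'I_(N.*2) => (val e).+1) (fun x => x \in E) (Hs E)).
rewrite -(perm_big _ (permEl (perm_sort leq _))) -/(pivot_seq E).
rewrite [LHS](big_nth 0) ps_size hE big_add1 /=.
by apply: eq_big_nat => i /andP[_ iN]; rewrite Hs_nth.
Qed.

Lemma is_pairingE N (P : {set 'I_(N.*2) * 'I_(N.*2)}) : is_pairing P = matching [set: 'I_(N.*2)] P.
Proof.
rewrite /is_pairing /matching; congr (_ && _); apply: eq_forallb => i.
by rewrite in_setT.
Qed.

Lemma cardT2 N : #|[set: 'I_(N.*2)]| = N.*2.
Proof. by rewrite cardsT card_ord. Qed.

Lemma prod_pos_iff (T : finType) (E : {set T}) (f : T -> nat) :
  (0 < \prod_(e in E) f e) = [forall e in E, 0 < f e].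
Proof.
apply/idP/forall_inP.
  by move=> h e eE; move: h; rewrite (bigD1 e) //= muln_gt0 => /andP[].
move=> h; apply: (big_ind (fun x => 0 < x)) => // x y; rewrite muln_gt0 => -> ->.
by [].
Qed.

Lemma pivset_char N (E : {set 'I_(N.*2)}) :
  (E \in [set pivots P | P in [set P : {set 'I_(N.*2) * 'I_(N.*2)} | is_pairing P]]) =
  (#|E| == N) && goodS setT E.
Proof.
apply/imsetP/andP.
  case=> P; rewrite inE is_pairingE => hm ->.
  have hc : #|piv P| = N.
    by apply: double_inj; rewrite -(match_size (erefl _) hm) cardT2.
  split; first by rewrite /pivots -/(piv P) hc.
  rewrite /goodS -prod_pos_iff -(count_piv hc (subsetT _)) ?cardT2 ?hc //.
  by apply/card_gt0P; exists P; rewrite inE hm eqxx.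
case=> /eqP hE good.
have : 0 < \prod_(e in E) F setT E e by rewrite prod_pos_iff.
rewrite -(count_piv hE (subsetT _)) ?cardT2 //.
case/card_gt0P => P; rewrite inE => /andP[hm /eqP pE].
by exists P; rewrite ?inE ?is_pairingE // -pE.
Qed.

Lemma pivbounds N (P : {set 'I_(N.*2) * 'I_(N.*2)}) : is_pairing P ->
  size (pivot_seq (pivots P)) = N /\
  forall n, 1 <= n <= N -> n <= nth 0 (pivot_seq (pivots P)) n.-1 <= n.*2 - 1.
Proof.
move=> hp.
have : pivots P \in [set pivots P | P in [set P : {set 'I_(N.*2) * 'I_(N.*2)} | is_pairing P]].
  by apply/imsetP; exists P; rewrite ?inE.
rewrite pivset_char => /andP[/eqP hE good].
move: (pivots P) hE good => E hE good.
have hsz : size (pivot_seq E) = N by rewrite ps_size.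
split => // n /andP[n1 nN].
have iN : n.-1 < N by lia.
have isz : n.-1 < size (pivot_seq E) by rewrite hsz.
apply/andP; split.
  have hpos : forall u, u \in pivot_seq E -> 0 < u by move=> u /ps_mem [e _ ->].
  have := sorted_lower (ps_sorted E) hpos isz; lia.
case: (ps_mem (mem_nth 0 isz)) => e eE ev.
have := forall_inP good e eE; rewrite F_Hs -ev Hs_nth //.
by rewrite -!mul2n; lia.
Qed.

Theorem proposition4 (N : nat) (hN : 1 <= N) :
  (* (i) constraints on the ordered pivots *)
  (forall P : {set 'I_(N.*2) * 'I_(N.*2)}, is_pairing P ->
     let s := pivot_seq (pivots P) in
     [/\ size s = N, nth 0 s 0 = 1, nth 0 s N.-1 < N.*2 &
         forall n, 1 <= n <= N -> n <= nth 0 s n.-1 <= n.*2 - 1]) /\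
  (* (i) number of possible pivot sets is the Catalan number *)
  #|[set pivots P | P in [set P : {set 'I_(N.*2) * 'I_(N.*2)} | is_pairing P]]|
    = (N.*2)`! %/ (N`! * N.+1`!) /\
  (* (ii) number of pairings with a fixed (possible) pivot set *)
  (forall E : {set 'I_(N.*2)},
     E \in [set pivots P | P in [set P : {set 'I_(N.*2) * 'I_(N.*2)} | is_pairing P]] ->
     #|[set P : {set 'I_(N.*2) * 'I_(N.*2)} | is_pairing P & pivots P == E]|
       = \prod_(1 <= n < N.+1) (n.*2 - nth 0 (pivot_seq E) n.-1)) /\
  (* (iii) total number of pairings *)
  #|[set P : {set 'I_(N.*2) * 'I_(N.*2)} | is_pairing P]| = dfact (N.*2 - 1).
Proof.
split.
  move=> P hp s; case: (pivbounds hp) => hsz hb.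
  have b1 := hb 1; rewrite /= hN in b1; move: (b1 isT) => {}b1.
  have bN := hb N; rewrite leqnn hN in bN; move: (bN isT) => {}bN.
  split => //.
    by rewrite /s; move: b1 => /=; lia.
  by rewrite /s; move: bN; rewrite -!mul2n; lia.
split.
  rewrite (_ : [set pivots P | P in _] = [set E : {set 'I_(N.*2)} |
       [&& E \subset [set: 'I_(N.*2)], #|E| == N & goodS setT E]]); last first.
    by apply/setP => E; rewrite pivset_char inE subsetT.
  rewrite (count_good _ (cardT2 N)).
  by case: N hN => [|k] // _; rewrite catalan.
split.
  move=> E hE; have := hE; rewrite pivset_char => /andP[/eqP cE _].
  rewrite -prod_conv // -(count_piv cE (subsetT _)) ?cardT2 //.
  by apply: eq_card => P; rewrite !inE is_pairingE.
rewrite -(count_all (cardT2 N)).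
by apply: eq_card => P; rewrite !inE is_pairingE.
Qed.
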